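(* Let $m,n\ge 0$ be integers with $m-n\equiv 1\pmod 2$, put $N=m+n$ and $k=\frac{N-1}{2}$, and let $1<r<\infty$. Then $$\left(\frac{2}{r+1}+\binom{N}{k}^r+\sum_{\substack{j=0\\ j\ne k}}^{N-1}\frac{\binom{N}{j+1}^{r+1}-\binom{N}{j}^{r+1}}{(r+1)\left[\binom{N}{j+1}-\binom{N}{j}\right]}\right)^{1/r} \le 2^m\Big(\sum_{j=0}^{n}\binom{n}{j}^r\Big)^{1/r}.$$
   Context: Binomial coefficients have their usual meaning. *)

(* Defs.v *)
From HB Require Import structures.
From mathcomp Require Import all_boot all_order all_algebra.
From mathcomp Require Import all_classical all_reals all_analysis.

(* Main.v *)
Require Import Defs.
From HB Require Import structures.
From mathcomp Require Import all_boot all_order all_algebra.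
From mathcomp Require Import all_classical all_reals all_analysis.
From mathcomp Require Import ring lra zify.
Import Order.TTheory GRing.Theory Num.Theory.
Local Open Scope classical_set_scope.
Local Open Scope ring_scope.

Lemma mvt_pos {R : realType} (f df : R -> R) (a b : R) : 0 < a -> a < b ->
  (forall x : R, 0 < x -> is_derive x (1:R) f (df x)) ->
  exists2 c, a < c < b & f b - f a = df c * (b - a).
Proof.
move=> a0 ab fd.
have fd' : forall x, x \in `]a, b[%R -> is_derive x 1 f (df x).
  by move=> x; rewrite in_itv /= => /andP[ax _]; apply: fd; apply: lt_trans ax.
have dv : {in `[a, b]%R, forall x, derivable f x 1}.
  move=> x xab.
  have x0 : 0 < x by move: xab; rewrite in_itv /= => /andP[+ _]; apply: lt_le_trans.
  by have [] := fd x x0.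
have [c cab E] := MVT ab fd' (derivable_within_continuous dv).
by exists c => //; move: cab; rewrite in_itv.
Qed.

Lemma tangent {R : realType} (r a c : R) : 1 <= r -> 0 <= a -> 0 < c ->
  c `^ r + r * c `^ (r - 1) * (a - c) <= a `^ r.
Proof.
move=> r1 a0 c0.
have r0 : 0 < r by rewrite (lt_le_trans ltr01).
have r10 : 0 <= r - 1 by rewrite subr_ge0.
have D (x : R) : 0 < x -> is_derive x 1 (@powR R ^~ r) (r * x `^ (r - 1)) by move=> x0; apply: (@is_derive1_powR R r x x0).
case: (ltgtP a c) => [ac|ca|->]; last by rewrite subrr mulr0 addr0.
- case: (eqVneq a 0) => [->|an0].
    rewrite powR0 ?gt_eqF// sub0r mulrN -mulrA (mulrC _ c) (mulr_powRB1 (ltW c0) r0).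
    rewrite -[X in X - _]mul1r -mulrBl.
    by apply: mulr_le0_ge0; rewrite ?powR_ge0// subr_le0.
  have a0' : 0 < a by rewrite lt_neqAle eq_sym an0.
  have [d /andP[ad dc] E] := mvt_pos _ _ _ _ a0' ac D.
  have -> : a `^ r = c `^ r - r * d `^ (r - 1) * (c - a) by rewrite -E opprB addrC subrK.
  rewrite lerD2l -mulrN opprB ler_nM2r ?subr_lt0// ler_pM2l//.
  by apply: ge0_ler_powR => //; rewrite ?nnegrE ?ltW// (lt_trans a0').

- have [d /andP[cd da] E] := mvt_pos _ _ _ _ c0 ca D.
  have -> : a `^ r = c `^ r + r * d `^ (r - 1) * (a - c) by rewrite -E addrC subrK.
  rewrite lerD2l ler_pM2r ?subr_gt0// ler_pM2l//.
  by apply: ge0_ler_powR => //; rewrite ?nnegrE ?ltW// (lt_trans c0).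
Qed.

Lemma hh {R : realType} (r a b : R) : 1 <= r -> 0 < a -> a < b ->
  b `^ (r + 1) - a `^ (r + 1) <= (r + 1) * (b - a) * (a `^ r + b `^ r) / 2.
Proof.
move=> r1 a0 ab.
pose F := ((2^-1 * (r + 1)) \*: (((@id R) - cst a) * (cst (a `^ r) + @powR R ^~ r)) - @powR R ^~ (r+1)).
pose dF := fun x : R => ((2^-1 * (r + 1)) * (a `^ r - x `^ r + r * x `^ (r - 1) * (x - a))).
have D (x : R) : 0 < x -> is_derive x 1 F (dF x).
  move=> x0.
  have P1 := is_derive1_powR r x0.
  have P2 := is_derive1_powR (r+1) x0.
  apply: is_derive_eq.
  by rewrite /= /GRing.scale /= addrK !fctE /= /dF; field.
have [c /andP[ac cb] E] := mvt_pos _ _ _ _ a0 ab D.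
have dF0 : 0 <= dF c.
  rewrite /dF mulr_ge0 //.
    by rewrite mulr_ge0 // ?invr_ge0 //; lra.
  have := @tangent _ r a c r1 (ltW a0) (lt_trans a0 ac).
  rewrite (_ : a - c = - (c - a)); last by rewrite opprB.
  rewrite mulrN; lra.
have : 0 <= F b - F a by rewrite E mulr_ge0 // subr_ge0 ltW.
rewrite /F !fctE /= subrr !mul0r /GRing.scale /= mulr0; nra.
Qed.

Lemma term_bound {R : realType} (r a b : R) : 1 <= r -> 0 < a -> 0 < b ->
  (b `^ (r + 1) - a `^ (r + 1)) / ((r + 1) * (b - a)) <= (a `^ r + b `^ r) / 2.
Proof.
move=> r1 a0 b0.
have r0 : 0 < r + 1 by lra.
have h2 : 0 <= (a `^ r + b `^ r) / 2 by rewrite divr_ge0 ?addr_ge0 ?powR_ge0.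
case: (ltgtP a b) => [ab|ba|->]; last by rewrite !subrr mulr0 invr0 mulr0 divr_ge0 ?addr_ge0 ?powR_ge0.
- rewrite ler_pdivrMr ?mulr_gt0 ?subr_gt0 //.
  have := @hh _ r a b r1 a0 ab; nra.
- rewrite -(opprB a b) -(opprB (a `^ (r + 1))) mulrN invrN mulrNN.
  rewrite ler_pdivrMr ?mulr_gt0 ?subr_gt0 //.
  have := @hh _ r b a r1 b0 ba; nra.
Qed.

Lemma term_ge0 {R : realType} (r a b : R) : 1 <= r -> 0 <= a -> 0 <= b ->
  0 <= (b `^ (r + 1) - a `^ (r + 1)) / ((r + 1) * (b - a)).
Proof.
move=> r1 a0 b0.
have r0 : 0 < r + 1 by lra.
have m x y : 0 <= x -> 0 <= y -> x < y -> x `^ (r + 1) < y `^ (r + 1).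
  by move=> x0 y0 xy; apply: gt0_ltr_powR.
case: (ltgtP a b) => [ab|ba|->]; last by rewrite !subrr mulr0 invr0 mulr0.
- apply: divr_ge0; first by rewrite subr_ge0 ltW // m.
  by rewrite mulr_ge0 ?subr_ge0 ?ltW.
- rewrite -(opprB a b) -(opprB (a `^ (r + 1))) mulrN invrN mulrNN.
  apply: divr_ge0; first by rewrite subr_ge0 ltW // m.
  by rewrite mulr_ge0 ?subr_ge0 ?ltW.
Qed.

Lemma midpoint {R : realType} (r a b : R) : 1 <= r -> 0 <= a -> 0 <= b ->
  (a + b) `^ r <= 2 `^ r * ((a `^ r + b `^ r) / 2).
Proof.
move=> r1 a0 b0.
have r0 : 0 < r by lra.
case: (eqVneq (a + b) 0) => [ab0|abn0].
  by rewrite ab0 powR0 ?gt_eqF // mulr_ge0 ?powR_ge0 ?divr_ge0 ?addr_ge0 ?powR_ge0.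
have c0 : 0 < (a + b) / 2.
  rewrite divr_gt0 // lt_neqAle eq_sym abn0 addr_ge0 //.
have -> : a + b = 2 * ((a + b) / 2) by field.
rewrite powRM // ?(ltW c0) // ler_pM2l ?powR_gt0 //.
have t1 := @tangent _ r a _ r1 a0 c0.
have t2 := @tangent _ r b _ r1 b0 c0.
rewrite ler_pdivlMr //.
have e : a - (a + b) / 2 + (b - (a + b) / 2) = 0 by field.
nra.
Qed.

Definition Ssum {R : realType} (r : R) (n : nat) : R :=
  \sum_(0 <= j < n.+1) ('C(n, j)%:R : R) `^ r.

Lemma S_step {R : realType} (r : R) n : 1 <= r -> Ssum r n.+1 <= 2 `^ r * Ssum r n.
Proof.
move=> r1.
have r0 : 0 < r by lra.
rewrite /Ssum big_nat_recl // bin0 powR1.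
under eq_bigr => j _ do rewrite binS natrD.
have le : \sum_(0 <= i < n.+1) ('C(n, i.+1)%:R + 'C(n, i)%:R : R) `^ r <=
   \sum_(0 <= i < n.+1) 2 `^ r * ((('C(n, i.+1)%:R : R) `^ r + ('C(n, i)%:R : R) `^ r) / 2).
  by apply: ler_sum => i _; apply: midpoint.
apply: le_trans (lerD (lexx 1) le) _.
rewrite -mulr_sumr -mulr_suml big_split /=.
have e1 : \sum_(0 <= i < n.+1) ('C(n, i.+1)%:R : R) `^ r =
          \sum_(0 <= i < n.+1) ('C(n, i)%:R : R) `^ r - 1.
  rewrite big_nat_recr //= bin_small // powR0 ?gt_eqF // addr0.
  by rewrite [in RHS]big_nat_recl // bin0 powR1 addrC addKr.
rewrite e1.
set s := \sum_(0 <= i < n.+1) _.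
have h2 : 2 <= 2 `^ r.
  by rewrite -{1}(@powRr1 _ 2) // ler_powR // ler1n.
have hs : 0 <= s by rewrite sumr_ge0 // => i _; rewrite powR_ge0.
nra.
Qed.

Lemma S_m {R : realType} (r : R) n m : 1 <= r -> Ssum r (n + m) <= (2 ^+ m) `^ r * Ssum r n.
Proof.
move=> r1.
elim: m => [|m IH]; first by rewrite addn0 expr0 powR1 mul1r.
rewrite addnS exprS powRM // ?exprn_ge0 //.
apply: (le_trans (S_step r (n + m) r1)).
rewrite -mulrA ler_pM2l ?powR_gt0 //.
Qed.

Theorem mainTheorem13 (R : realType) (m n : nat) (r : R) :
  odd (m + n) -> 1 < r ->
  let N := (m + n)%N in
  let k := ((N - 1) %/ 2)%N in
  (2 / (r + 1) + ('C(N, k)%:R : R) `^ r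
   + \sum_(0 <= j < N | j != k)
       ((('C(N, j.+1)%:R : R) `^ (r + 1) - ('C(N, j)%:R : R) `^ (r + 1))
        / ((r + 1) * ('C(N, j.+1)%:R - 'C(N, j)%:R)))) `^ (r^-1)
  <= 2 ^+ m * (\sum_(0 <= j < n.+1) ('C(n, j)%:R : R) `^ r) `^ (r^-1).
Proof.
move=> oddN r1'; cbv zeta.
set N := (m + n)%N.
set k := ((N - 1) %/ 2)%N.
have r1 : 1 <= r by apply: ltW.
have r0 : 0 < r by lra.
set h := N./2.
have hN : N = (h + h).+1.
  by have := odd_double_half N; rewrite oddN -addnn add1n => ->.
have hk : k = h by rewrite /k hN subn1 /= addnn divn2 doubleK.
have hbin : 'C(N, h.+1) = 'C(N, h).
  have e : (N - h)%N = h.+1 by rewrite hN; lia.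
  by rewrite -e bin_sub // hN; lia.
set C := fun j => ('C(N, j)%:R : R).
set T := fun j => (C j.+1 `^ (r + 1) - C j `^ (r + 1)) / ((r + 1) * (C j.+1 - C j)).
set U := fun j => (C j `^ r + C j.+1 `^ r) / 2.
have TU j : (j < N)%N -> T j <= U j.
  move=> jN; rewrite /T /U; apply: term_bound => //.
    by rewrite /C ltr0n bin_gt0 ltnW.
  by rewrite /C ltr0n bin_gt0.
have T0 j : 0 <= T j by apply: term_ge0; rewrite // /C ler0n.
have sumTU : \sum_(0 <= j < N | j != k) T j <= \sum_(0 <= j < N | j != k) U j.
  rewrite [X in X <= _]big_mkcond [X in _ <= X]big_mkcond /=.
  apply: ler_sum_nat => j /= jN; case: ifP => // _; exact: TU.
have sumU : \sum_(0 <= j < N | j != k) U j = Ssum r N - 1 - C k `^ r.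
  have -> : \sum_(0 <= j < N | j != k) U j = \sum_(0 <= j < N) U j - U k.
    rewrite [X in _ = X - _](@bigD1_seq _ _ _ _ _ k) /=; last exact: iota_uniq.
      by rewrite addrC addrK.
    by rewrite mem_index_iota hk hN; lia.
  have -> : U k = C k `^ r by rewrite /U hk /C hbin; field; rewrite ?addr_ge0.
  rewrite /U -mulr_suml big_split /=.
  have e1 : \sum_(0 <= i < N) C i `^ r = Ssum r N - 1.
    by rewrite /Ssum big_nat_recr //= binn powR1 addrK.
  have e2 : \sum_(0 <= i < N) C i.+1 `^ r = Ssum r N - 1.
    by rewrite /Ssum big_nat_recl //= bin0 powR1 addrC addKr.
  by rewrite e1 e2; field.
have base_le : 2 / (r + 1) + C k `^ r + \sum_(0 <= j < N | j != k) T j <= Ssum r N.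
  have : 2 / (r + 1) <= 1 by rewrite ler_pdivrMr; lra.
  lra.
have base_ge0 : 0 <= 2 / (r + 1) + C k `^ r + \sum_(0 <= j < N | j != k) T j.
  by rewrite !addr_ge0 ?divr_ge0 ?powR_ge0 ?sumr_ge0 //; lra.
have SN : Ssum r N <= (2 ^+ m) `^ r * Ssum r n by rewrite /N addnC; apply: S_m.
have Sn0 : 0 <= Ssum r n by rewrite sumr_ge0 // => i _; rewrite powR_ge0.
apply: (@le_trans _ _ (((2 ^+ m) `^ r * Ssum r n) `^ r^-1)).
  apply: ge0_ler_powR; rewrite ?invr_ge0 ?nnegrE ?mulr_ge0 ?powR_ge0 //; first exact: ltW.
  exact: le_trans base_le SN.
rewrite powRM ?powR_ge0 // -powRrM mulfV ?gt_eqF // powRr1 ?exprn_ge0 //.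
Qed.
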